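(* The function $\phi:(0,\infty)\to\mathbb{R}$, $\phi(x)=\frac{1}{\tanh^2(x)}-\frac{1}{x\tanh(x)}$, is increasing on $(0,\infty)$. *)

(* Defs.v *)
From Stdlib Require Export Reals.
Open Scope R_scope.

Definition phi (x : R) : R := 1 / (tanh x ^ 2) - 1 / (x * tanh x).

(* Main.v *)
Require Import Defs.
From Stdlib Require Import Reals Lra Psatz.
From Coquelicot Require Import Coquelicot.
Open Scope R_scope.
Definition G (k : nat) (x : R) : R :=
  3^k*(exp(3*x) + (-1)^k*exp(-(3*x)))
  + (4*INR k - 1 - 8*INR k*(INR k - 1))*(exp x + (-1)^k*exp(-x))
  + (4 - 16*INR k)*x*(exp x - (-1)^k*exp(-x))
  - 8*x^2*(exp x + (-1)^k*exp(-x)).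
Lemma G_der k x : is_derive (G k) x (G (S k) x).
Proof.
  unfold G. auto_derive; [easy|]. rewrite S_INR. simpl pow. ring.
Qed.
Lemma G0s : G 0 0 = 0 /\ G 1 0 = 0 /\ G 2 0 = 0 /\ G 3 0 = 0 /\ G 4 0 = 0 /\ G 5 0 = 0.
Proof. unfold G; rewrite !Rmult_0_r, !Ropp_0, exp_0; simpl; repeat split; lra. Qed.
Lemma step k : G k 0 = 0 -> (forall x, 0 < x -> 0 < G (S k) x) -> forall x, 0 < x -> 0 < G k x.
Proof.
  intros H0 Hs x Hx.
  destruct (MVT_cor2 (G k) (G (S k)) 0 x Hx) as [c [Hc1 Hc2]].
  { intros c _. apply is_derive_Reals, G_der. }
  rewrite H0 in Hc1. assert (0 < G (S k) c) by (apply Hs; lra). nra.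
Qed.
Lemma exp3 x : exp (3*x) = exp x ^ 3.
Proof. replace (3*x) with (x+x+x) by ring. rewrite !exp_plus. ring. Qed.
Lemma expm3 x : exp (-(3*x)) = / exp x ^ 3.
Proof. rewrite exp_Ropp, exp3. reflexivity. Qed.
Lemma G6pos x : 0 < x -> 0 < G 6 x.
Proof.
  intros Hx. unfold G. rewrite exp3, expm3, exp_Ropp. simpl pow; simpl INR.
  set (E := exp x).
  assert (HE : 1 < E) by (unfold E; generalize (exp_ineq1 x); intro; lra || (apply Rlt_le_trans with (1+x); [lra| apply exp_ineq1_le])).
  assert (Hx1 : x <= E - 1) by (unfold E; generalize (exp_ineq1_le x); lra).
  assert (HD : 0 < E - /E).
  { assert (/E < 1). { rewrite <- Rinv_1; apply Rinv_lt_contravar; lra. } lra. }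
  assert (Hxx : x*x <= (E-1)*(E-1)) by nra.
  assert (H1 : x * (E - /E) <= (E-1)*(E-/E)) by nra.
  assert (Hi : 0 < /E) by (apply Rinv_0_lt_compat; lra).
  assert (Hp : 0 < E + /E) by lra.
  assert (H2 : x*x*(E + /E) <= (E-1)*(E-1)*(E + /E)) by nra.
  set (y := /E) in *.
  assert (Ey : E * y = 1) by (unfold y; field; lra).
  assert (Hpoly : 0 < 729*(E*E*E + y*y*y) - 217*(E+y) - 92*(E-1)*(E-y) - 8*(E-1)*(E-1)*(E+y)).
  { replace y with (/E) by reflexivity.
    assert (0 < E^3) by (apply pow_lt; lra).
    apply Rmult_lt_reg_r with (E^3); [lra|]. rewrite Rmult_0_l.
    replace ((729*(E*E*E + /E*/E*/E) - 217*(E+/E) - 92*(E-1)*(E-/E) - 8*(E-1)*(E-1)*(E+/E)) * E^3)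
      with (729*(E^6+1) - 217*(E^4+E^2) - 92*(E-1)*(E^2-1)*E^2 - 8*(E-1)^2*(E^2+1)*E^2) by (field; lra).
    set (t := E - 1). replace E with (1 + t) by (unfold t; ring). assert (0 < t) by (unfold t; lra).
    ring_simplify. nra. }
  replace (/ (E * (E * (E * 1)))) with (y*y*y) by (unfold y; field; lra).
  nra.
Qed.
Lemma phi_der x : 0 < x -> is_derive phi x (G 0 x / (x^2 * (exp x - exp (-x))^3)).
Proof.
  intros Hx.
  assert (HE : 1 < exp x) by (generalize (exp_ineq1_le x); lra).
  assert (Hm : exp (-x) < 1).
  { rewrite exp_Ropp. rewrite <- Rinv_1. apply Rinv_lt_contravar; lra. }
  assert (Hm0 : 0 < exp (-x)) by apply exp_pos.
  assert (Hd : exp x - exp (-x) <> 0) by lra.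
  assert (Hp : exp x + exp (-x) <> 0) by lra.
  unfold phi, tanh, sinh, cosh.
  auto_derive.
  - repeat split; repeat match goal with |- _ * _ <> 0 => apply Rmult_integral_contrapositive_currified | |- / _ <> 0 => apply Rinv_neq_0_compat end; lra.
  - unfold G. rewrite exp3, expm3, exp_Ropp. simpl INR; simpl pow.
    assert (E0 : exp x <> 0) by lra.
    assert (E1 : exp x * exp x - 1 <> 0) by nra.
    assert (E2 : exp x * exp x + 1 <> 0) by nra.
    rewrite exp_Ropp in Hd, Hp. field. repeat split; lra.
Qed.
Theorem lemma6p3 : forall x y : R, 0 < x -> x < y -> phi x < phi y.
Proof.
  intros x y Hx Hxy.
  assert (G0pos : forall z, 0 < z -> 0 < G 0 z).
  { destruct G0s as [g0 [g1 [g2 [g3 [g4 g5]]]]].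
    apply step; auto. apply step; auto. apply step; auto. apply step; auto.
    apply step; auto. apply step; auto. apply G6pos. }
  destruct (MVT_cor2 phi (fun z => G 0 z / (z^2 * (exp z - exp (-z))^3)) x y Hxy) as [c [Hc1 Hc2]].
  { intros c Hc. apply is_derive_Reals, phi_der. lra. }
  assert (Hc : 0 < c) by lra.
  assert (HE : 1 < exp c) by (generalize (exp_ineq1_le c); lra).
  assert (Hm : exp (-c) < 1).
  { rewrite exp_Ropp. rewrite <- Rinv_1. apply Rinv_lt_contravar; lra. }
  assert (0 < G 0 c / (c^2 * (exp c - exp (-c))^3)).
  { apply Rdiv_lt_0_compat; [auto|]. apply Rmult_lt_0_compat; apply pow_lt; lra. }
  nra.
Qed.
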